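(* For every positive integer $n$, \[ \sum_{j=1}^{n}(-1)^j\left(\binom{n}{j}-1\right)\frac{B_j}{j}=n-H_n . \]
   Context: $B_j$ is the $j$th Bernoulli number ($\frac{t}{e^t-1}=\sum_{m\ge0}B_m\frac{t^m}{m!}$, so $B_1=-1/2$). $H_n=\sum_{i=1}^n1/i$. *)

(* Defs.v *)
From mathcomp Require Import all_boot all_order all_algebra.
Set Implicit Arguments. Unset Strict Implicit. Unset Printing Implicit Defensive.
Import Order.TTheory GRing.Theory Num.Theory.
Local Open Scope ring_scope.

(* Bernoulli numbers B_m (convention B_1 = -1/2, i.e. t/(e^t-1) = sum B_m t^m/m!),
   defined by the equivalent standard recurrence obtained by multiplying the
   generating function by (e^t - 1)/t :
     B_0 = 1,   B_m = - 1/(m+1) * sum_{k<m} C(m+1,k) B_k   (m >= 1). *)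
Fixpoint bern_seq (m : nat) : seq rat :=
  match m with
  | 0%N => [:: 1]
  | m'.+1 =>
      let s := bern_seq m' in
      rcons s (- (m'.+2%:R)^-1 *
               \sum_(k < m'.+1) ('C(m'.+2, k))%:R * nth 0 s k)
  end.

Definition bernoulli (m : nat) : rat := nth 0 (bern_seq m) m.

Definition harmonic (n : nat) : rat := \sum_(1 <= i < n.+1) (i%:R)^-1.

(* Main.v *)
Require Import Defs.
From mathcomp Require Import all_boot all_order all_algebra.
From mathcomp Require Import ring lra zify.
Import GRing.Theory Num.Theory.
Local Open Scope ring_scope.

Definition conv (a b : nat -> rat) (m : nat) : rat :=
  \sum_(k < m.+1) ('C(m, k))%:R * a k * b (m - k)%N.

Lemma eq_conv a a' b b' m : (forall i, a i = a' i) -> (forall i, b i = b' i) ->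
  conv a b m = conv a' b' m.
Proof. by move=> ha hb; apply: eq_bigr => k _; rewrite ha hb. Qed.

Lemma convC a b m : conv a b m = conv b a m.
Proof.
rewrite /conv (reindex_inj rev_ord_inj) /=; apply: eq_bigr => k _.
have hk : (k <= m)%N by rewrite -ltnS.
rewrite subSS subKn // bin_sub //; ring.
Qed.

Lemma convNr a b m : conv a (fun i => - b i) m = - conv a b m.
Proof. rewrite /conv -sumrN; apply: eq_bigr => k _; ring. Qed.

Lemma convNl a b m : conv (fun i => - a i) b m = - conv a b m.
Proof. rewrite /conv -sumrN; apply: eq_bigr => k _; ring. Qed.

Lemma bin_mul_nat m i j : ('C(m, i + j) * 'C(i + j, i) = 'C(m, i) * 'C(m - i, j))%N.
Proof.
case: (leqP (i + j) m) => h; last first.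
  rewrite (bin_small h) mul0n; case: (leqP i m) => hi; last by rewrite bin_small.
  by rewrite (@bin_small (m - i) j) ?muln0 //; lia.
have hi : (i <= m)%N by apply: leq_trans (leq_addr _ _) h.
have hK : (0 < i`! * j`! * (m - (i + j))`!)%N by rewrite !muln_gt0 !fact_gt0.
apply/eqP; rewrite -(eqn_pmul2r hK).
have hj : (j <= m - i)%N by rewrite leq_subRL // addnC.
have e1 := congr1 (fun x => x%:R : rat) (bin_fact h).
have e2 := congr1 (fun x => x%:R : rat) (bin_fact (leq_addr j i)).
rewrite addKn in e2.
have e3 := congr1 (fun x => x%:R : rat) (bin_fact hi).
have e4 := congr1 (fun x => x%:R : rat) (bin_fact hj).
rewrite -subnDA in e4.
rewrite /= !natrM in e1 e2 e3 e4.
rewrite -(eqr_nat rat) !natrM; apply/eqP.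
set C1 := 'C(m, i + j)%:R in e1 *. set C2 := 'C(i + j, i)%:R in e2 *.
set C3 := 'C(m, i)%:R in e3 *. set C4 := 'C(m - i, j)%:R in e4 *.
transitivity (C1 * (C2 * ((i`!)%:R * (j`!)%:R)) * ((m - (i+j))`!)%:R : rat); first ring.
rewrite e2 -mulrA e1 -e3.
transitivity (C3 * (i`!)%:R * (C4 * ((j`!)%:R * ((m - (i+j))`!)%:R)) : rat); last ring.
by rewrite e4 mulrA.
Qed.

Lemma convA a b c m : conv (conv a b) c m = conv a (conv b c) m.
Proof.
rewrite /conv.
transitivity (\sum_(k < m.+1) \sum_(i < m.+1)
   ('C(m, k))%:R * (('C(k, i))%:R * a i * b (k - i)%N) * c (m - k)%N).
  apply: eq_bigr => k _; rewrite mulr_sumr mulr_suml.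
  rewrite (@big_ord_widen _ _ _ k.+1 m.+1 (fun i => ('C(m, k))%:R * (('C(k, i))%:R * a i * b (k - i)%N) * c (m - k)%N)); last exact: ltn_ord.
  rewrite [RHS](bigID (fun i : 'I_m.+1 => (i < k.+1)%N)) /= [X in _ = _ + X]big1 ?addr0 //.
  by move=> i; rewrite -leqNgt => hi; rewrite (bin_small hi) !(mul0r, mulr0).
rewrite exchange_big /=; apply: eq_bigr => i _.
rewrite mulr_sumr.
rewrite -(big_mkord xpredT (fun k => ('C(m, k))%:R * (('C(k, i))%:R * a i * b (k - i)%N) * c (m - k)%N)).
rewrite (big_cat_nat (n := i)) //=; last by rewrite ltnW // ltnS -ltnS.
rewrite big_nat big1 ?add0r; last by move=> k /andP[_ hk]; rewrite (bin_small hk) !(mul0r, mulr0).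
rewrite -{1}(add0n i) big_addn big_mkord.
have -> : (m.+1 - i = (m - i).+1)%N by rewrite subSn // -ltnS.
apply: eq_bigr => j _.
rewrite addnK [(j + i)%N]addnC -subnDA.
have := congr1 (fun x => x%:R : rat) (bin_mul_nat m i j); rewrite /= !natrM => E.
transitivity (('C(m, i + j)%:R * 'C(i + j, i)%:R) * a i * b j * c (m - (i + j))%N : rat); first ring.
rewrite E; ring.
Qed.

Lemma size_bern m : size (bern_seq m) = m.+1.
Proof. by elim: m => [|m IH] //=; rewrite size_rcons IH. Qed.

Lemma nth_bern m k : (k <= m)%N -> nth 0 (bern_seq m) k = bernoulli k.
Proof.
elim: m => [|m IH]; first by rewrite leqn0 => /eqP ->.
rewrite leq_eqVlt => /orP[/eqP -> //|]; rewrite ltnS => hk.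
by rewrite /= nth_rcons size_bern ltnS hk IH.
Qed.

Lemma bernS m : bernoulli m.+1 =
  - (m.+2%:R)^-1 * \sum_(k < m.+1) ('C(m.+2, k))%:R * bernoulli k.
Proof.
rewrite /bernoulli /= nth_rcons size_bern ltnn eqxx.
congr (_ * _); apply: eq_bigr => k _; rewrite nth_bern //.
by have := ltn_ord k; rewrite ltnS.
Qed.

Definition sg (a : nat -> rat) i := (-1) ^+ i * a i.
Definition em1 (i : nat) : rat := if i == 0%N then 0 else 1.
Definition d1 (i : nat) : rat := (i == 1%N)%:R.
Definition e (i : nat) : rat := 1.

Lemma conv_sg a b m : conv (sg a) (sg b) m = (-1) ^+ m * conv a b m.
Proof.
rewrite /conv mulr_sumr; apply: eq_bigr => k _; rewrite /sg.
have hk : (k <= m)%N by rewrite -ltnS.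
have -> : ((-1) ^+ m = (-1) ^+ k * (-1) ^+ (m - k) :> rat) by rewrite -exprD subnKC.
ring.
Qed.

Lemma conv_bern m : conv bernoulli em1 m = d1 m.
Proof.
case: m => [|p]; first by rewrite /conv big_ord1 /em1 /d1 /=; ring.
rewrite /conv big_ord_recr /= subnn /em1 /= mulr0 addr0.
under eq_bigr => k _ do rewrite subn_eq0 leqNgt (ltn_ord k) /= mulr1.
case: p => [|q]; first by rewrite big_ord1 /d1 /bernoulli /= mulr1.
rewrite big_ord_recr /= bernS binSn /d1 /=.
set S := \sum_(i < q.+1) _.
have h : (q.+2%:R : rat) != 0 by rewrite pnatr_eq0.
by rewrite mulrA mulrN mulfV // mulN1r subrr.
Qed.

Lemma conv_sgem1_e m : conv (sg em1) e m = - em1 m.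
Proof.
rewrite /conv.
transitivity (\sum_(k < m.+1) ('C(m, k))%:R * (-1) ^+ k - \sum_(k < m.+1) ('C(m, k))%:R * (nat_of_ord k == 0%N)%:R : rat).
  rewrite -sumrB; apply: eq_bigr => k _; rewrite /sg /em1 /e.
  by case: k => [[|k'] hk] /=; ring.
rewrite [X in _ - X]big_ord_recl /= bin0 mulr1.
rewrite [X in _ - (_ + X)]big1 ?addr0; last by move=> i _; rewrite mulr0.
have E : \sum_(k < m.+1) ('C(m, k))%:R * (-1) ^+ k = (1 + -1 : rat) ^+ m.
  by rewrite exprDn; apply: eq_bigr => i _; rewrite expr1n mul1r mulr_natl.
rewrite E subrr.
by clear E; case: m => [|m]; rewrite /em1 /= ?expr0 ?expr0n /=; ring.
Qed.

Lemma conv_d1_e m : conv d1 e m = m%:R.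
Proof.
case: m => [|p]; first by rewrite /conv big_ord1 /d1 /=; ring.
rewrite /conv big_ord_recl big_ord_recl /= big1 ?addr0.
  by rewrite /d1 /e /= bin1; ring.
by move=> i _; rewrite /d1 /=; ring.
Qed.

Lemma Tm m : \sum_(k < m) ('C(m, k))%:R * ((-1) ^+ k * bernoulli k) = m%:R.
Proof.
have hX1 : conv (sg bernoulli) (conv (sg em1) e) m = - conv (sg bernoulli) em1 m.
  rewrite -convNr; apply: eq_conv => // i; exact: conv_sgem1_e.
have hX2 : conv (sg bernoulli) (conv (sg em1) e) m = - (m%:R).
  rewrite -convA -conv_d1_e -convNl; apply: eq_conv => // i.
  rewrite conv_sg conv_bern /d1; case: (i =P 1%N) => [->|_]; rewrite ?expr1 /=; ring.
have : conv (sg bernoulli) em1 m = m%:R by apply: oppr_inj; rewrite -hX1.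
rewrite /conv big_ord_recr /= subnn /em1 /= mulr0 addr0 => <-.
apply: eq_bigr => k _; rewrite subn_eq0 leqNgt (ltn_ord k) /sg /=; ring.
Qed.

Definition L n := \sum_(j < n)
   (-1) ^+ j.+1 * (('C(n, j.+1))%:R - 1) * (bernoulli j.+1 / j.+1%:R) : rat.

Lemma Lform n : \sum_(1 <= j < n.+1)
     (-1) ^+ j * (('C(n, j))%:R - 1) * (bernoulli j / j%:R) = L n.
Proof. by rewrite big_add1 /= big_mkord. Qed.

Lemma LS n : L n.+1 = L n + n%:R / n.+1%:R.
Proof.
rewrite /L.
pose A (j : nat) := (-1) ^+ j.+1 * (('C(n, j.+1))%:R - 1) * (bernoulli j.+1 / j.+1%:R) : rat.
pose Bt (j : nat) := (-1) ^+ j.+1 * ('C(n, j))%:R * (bernoulli j.+1 / j.+1%:R) : rat.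
rewrite (eq_bigr (fun j : 'I_n.+1 => A j + Bt j)); last first.
  by move=> j _; rewrite /A /Bt binS natrD; ring.
rewrite big_split /= big_ord_recr /= big_ord_recr /=.
have hT := Tm n.+1.
rewrite big_ord_recl /= bin0 expr0 mul1r in hT.
have hn1 : (n.+1%:R : rat) != 0 by rewrite pnatr_eq0.
have hB : \sum_(i < n) Bt i = (n.+1%:R)^-1 *
    \sum_(i < n) ('C(n.+1, bump 0 i))%:R * ((-1) ^+ bump 0 i * bernoulli (bump 0 i)).
  rewrite mulr_sumr; apply: eq_bigr => j _; rewrite /Bt /bump /=.
  have hj : (j.+1%:R : rat) != 0 by rewrite pnatr_eq0.
  have := mul_bin_diag n.+1 j; rewrite /= => /(congr1 (fun x => x%:R : rat)).
  rewrite !natrM => E.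
  have -> : ('C(n.+1, j.+1))%:R = (n.+1%:R * ('C(n, j))%:R) / j.+1%:R :> rat.
    by rewrite E mulrC mulKf.
  by rewrite add1n; field; rewrite !nat1r hj hn1.
have hnB : bernoulli 0 = 1 by [].
rewrite hB.
have -> : \sum_(i < n) ('C(n.+1, bump 0 i))%:R * ((-1) ^+ bump 0 i * bernoulli (bump 0 i)) = n%:R.
  by apply: (addrI (bernoulli 0)); rewrite hT hnB -natr1 addrC.
rewrite /A /Bt bin_small // binn.
by field; rewrite nat1r.
Qed.

Theorem mainTheorem6 (n : nat) (hn : (0 < n)%N) :
  \sum_(1 <= j < n.+1)
     (-1) ^+ j * (('C(n, j))%:R - 1) * (bernoulli j / j%:R)
  = n%:R - harmonic n :> rat.
Proof.
clear hn; rewrite Lform.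
elim: n => [|n IH]; first by rewrite /L big_ord0 /harmonic big_geq //; ring.
rewrite LS IH /harmonic [in RHS]big_nat_recr //=.
set H := \sum_(1 <= i < n.+1) _.
have hn1 : (n.+1%:R : rat) != 0 by rewrite pnatr_eq0.
rewrite -[in n.+1%:R - _]natr1; field; by rewrite natr1.
Qed.
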